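(* Under the standing setup, define $$D^+_{MOB}=\frac{\mathbb E[\min\{Y_N-\underline Y(1-X_N),\,\overline Y X_N\}]-\mathbb E[X]\,\mathbb E[Y]}{\mathrm{Var}(X)},\qquad D^-_{MOB}=\frac{\mathbb E[Y](1-\mathbb E[X])-\mathbb E[\min\{Y_N-\underline Y X_N,\,\overline Y(1-X_N)\}]}{\mathrm{Var}(X)}.$$ Then $D\in[D^-_{MOB},D^+_{MOB}]$, and this bound is sharp (absent additional information).
   Context: Let $(X,Y,N)$ be a random triple with $X\in\{0,1\}$, $Y$ real-valued, $N$ taking values in a finite set $\mathcal N$. Write $p_n=\Pr(N=n)$, $X_n=\mathbb E[X\mid N=n]$, $Y_n=\mathbb E[Y\mid N=n]$, $X_N=\mathbb E[X\mid N]$, $Y_N=\mathbb E[Y\mid N]$. Assume some $n$ has $p_n>0$ and $X_n\in(0,1)$. Fix reals $\underline Y\le\overline Y$ and assume $\mathbb E[Y\mid X=x,N=n]\in[\underline Y,\overline Y]$ whenever $\Pr(X=x,N=n)>0$. $D=\mathbb E[Y\mid X=1]-\mathbb E[Y\mid X=0]$. Observed data: $(p_n,X_n,Y_n)_n$. Sharpness: the parameter lies in the interval for every joint distribution satisfying the standing assumptions, and every value in the interval is attained by some joint distribution of $(X,Y,N)$ with the same observed data satisfying the standing bound. *)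

(* Defs.v *)
(* a joint distribution of (X,Y,N) is given by random
   variables X Y : T -> R and N : T -> I (I a finite type) on a probability
   space (T, P). *)
From HB Require Import structures.
From mathcomp Require Import all_boot all_order all_algebra.
From mathcomp Require Import all_classical all_reals all_analysis.
Set Implicit Arguments.
Unset Strict Implicit.
Unset Printing Implicit Defensive.
Import Order.TTheory GRing.Theory Num.Theory.
Local Open Scope ring_scope.
Local Open Scope classical_set_scope.

Section MOB.
Context {R : realType} {d : measure_display} {T : measurableType d}.
Variable P : probability T R.

(* expectation E[f] (real-valued; f is assumed integrable where used) *)
Definition Ex (f : T -> R) : R := fine (\int[P]_x (f x)%:E).
Definition Pr (A : set T) : R := fine (P A).
Definition condE (f : T -> R) (A : set T) : R :=
  Ex (fun t => f t * \1_A t) / Pr A.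
Definition Var (f : T -> R) : R := Ex (fun t => (f t - Ex f) ^+ 2).

Context {I : finType}.
Variables (X Y : T -> R) (N : T -> I).

Definition p_ (n : I) : R := Pr [set t | N t = n].
Definition X_ (n : I) : R := condE X [set t | N t = n].
Definition Y_ (n : I) : R := condE Y [set t | N t = n].

Definition Dpar : R := condE Y [set t | X t = 1] - condE Y [set t | X t = 0].

Variables (Ylo Yhi : R).

Definition DplusMOB : R :=
  (Ex (fun t => Num.min (Y_ (N t) - Ylo * (1 - X_ (N t))) (Yhi * X_ (N t)))
     - Ex X * Ex Y) / Var X.

Definition DminusMOB : R :=
  (Ex Y * (1 - Ex X)
     - Ex (fun t => Num.min (Y_ (N t) - Ylo * X_ (N t)) (Yhi * (1 - X_ (N t)))))
  / Var X.

Definition standing : Prop :=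
  [/\ measurable_fun setT X /\ measurable_fun setT Y,
      (forall n : I, measurable [set t | N t = n]) /\
      (forall t, X t = 0 \/ X t = 1),
      P.-integrable setT (EFin \o Y),
      (exists n : I, 0 < p_ n /\ 0 < X_ n < 1) &
      (forall (x : R) (n : I), (x = 0 \/ x = 1) ->
          0 < Pr [set t | X t = x /\ N t = n] ->
          Ylo <= condE Y [set t | X t = x /\ N t = n] <= Yhi)].
End MOB.

Definition same_observed {R : realType} {I : finType}
  {d : measure_display} {T : measurableType d} (P : probability T R)
  (X Y : T -> R) (N : T -> I)
  {d' : measure_display} {T' : measurableType d'} (P' : probability T' R)
  (X' Y' : T' -> R) (N' : T' -> I) : Prop :=
  forall n : I, [/\ p_ P' N' n = p_ P N n, X_ P' X' N' n = X_ P X N n &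
                   Y_ P' Y' N' n = Y_ P Y N n].

(* Main.v *)
Require Import Defs.
From HB Require Import structures.
From mathcomp Require Import all_boot all_order all_algebra.
From mathcomp Require Import all_classical all_reals all_analysis.
From mathcomp Require Import measurable_realfun.
From mathcomp Require Import ring lra.
Import Order.TTheory GRing.Theory Num.Theory.
Local Open Scope ring_scope.
Local Open Scope classical_set_scope.

Lemma minfacts (R : realType) (a b : R) :
  [/\ Num.min a b <= a, Num.min a b <= b & Num.min a b = a \/ Num.min a b = b].
Proof.
have [h|h] := leP a b.
  by split => //; left.
by split => //; [exact: ltW| right].
Qed.


Section Alg.
Variables (R : realType) (I : finType) (c1 c0 s1 s0 : I -> R) (Ylo Yhi : R).
Hypothesis hlh : Ylo <= Yhi.
Hypothesis hc1 : forall n, 0 <= c1 n.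
Hypothesis hc0 : forall n, 0 <= c0 n.
Hypothesis hb1 : forall n, Ylo * c1 n <= s1 n <= Yhi * c1 n.
Hypothesis hb0 : forall n, Ylo * c0 n <= s0 n <= Yhi * c0 n.
Hypothesis hsum : \sum_n (c1 n + c0 n) = 1.
Hypothesis hm : 0 < \sum_n c1 n < 1.

Let p n := c1 n + c0 n.
Definition gp n := Num.min ((s1 n + s0 n) / p n - Ylo * (1 - c1 n / p n)) (Yhi * (c1 n / p n)).
Definition gm n := Num.min ((s1 n + s0 n) / p n - Ylo * (c1 n / p n)) (Yhi * (1 - c1 n / p n)).
Definition U n := Num.min (s1 n + s0 n - Ylo * c0 n) (Yhi * c1 n).
Definition L' n := Num.min (s1 n + s0 n - Ylo * c1 n) (Yhi * c0 n).

Lemma p0 n : p n = 0 -> [/\ c1 n = 0, c0 n = 0, s1 n = 0 & s0 n = 0].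
Proof.
rewrite /p => h.
have e1 : c1 n = 0 by have := hc1 n; have := hc0 n; lra.
have e0 : c0 n = 0 by have := hc1 n; have := hc0 n; lra.
split => //.
  by have := hb1 n; rewrite e1 !mulr0; lra.
by have := hb0 n; rewrite e0 !mulr0; lra.
Qed.

Lemma gp_eq n : gp n * c1 n + gp n * c0 n = U n.
Proof.
rewrite -mulrDr -/(p n) /gp /U.
have [h|h] := eqVneq (p n) 0.
  by case: (p0 n h) => -> -> -> ->; rewrite h !mulr0 subr0 addr0 minxx.
have pp : 0 < p n by rewrite lt0r h /p addr_ge0.
rewrite mulrC minr_pMr ?ltW //; congr Num.min.
  rewrite /p in h *; field; exact: h.
rewrite /p in h *; field; exact: h.
Qed.

Lemma gm_eq n : gm n * c1 n + gm n * c0 n = L' n.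
Proof.
rewrite -mulrDr -/(p n) /gm /L'.
have [h|h] := eqVneq (p n) 0.
  by case: (p0 n h) => -> -> -> ->; rewrite h !mulr0 subr0 addr0 minxx.
have pp : 0 < p n by rewrite lt0r h /p addr_ge0.
rewrite mulrC minr_pMr ?ltW //; congr Num.min.
  rewrite /p in h *; field; exact: h.
rewrite /p in h *; field; exact: h.
Qed.


Let m := \sum_n c1 n.
Let V := \sum_n ((1 - m) ^+ 2 * c1 n + (0 - m) ^+ 2 * c0 n).
Let EY := \sum_n (s1 n + s0 n).

Lemma Sc0 : \sum_n c0 n = 1 - m.
Proof. by move: hsum; rewrite big_split /= -/m => <-; ring. Qed.

Lemma EV : V = m * (1 - m).
Proof. by rewrite /V big_split /= -!mulr_sumr Sc0 -/m; ring. Qed.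

Lemma EEY : EY = \sum_n s1 n + \sum_n s0 n.
Proof. by rewrite /EY big_split. Qed.

Lemma Vpos : 0 < V.
Proof. by case/andP: hm; rewrite -/m => h1 h2; rewrite EV; apply: mulr_gt0; lra. Qed.

Lemma ED : (\sum_n s1 n) / m - (\sum_n s0 n) / (\sum_n c0 n) = (\sum_n s1 n - m * EY) / V.
Proof.
rewrite Sc0 EV EEY /m; case/andP: hm => h1 h2.
move: (\sum_n c1 n) h1 h2 => mm h1 h2; move: (\sum_n s1 n) (\sum_n s0 n) => a b.
field; apply/andP; split; apply/eqP; lra.
Qed.

Lemma s1U : \sum_n s1 n <= \sum_n U n.
Proof.
apply: ler_sum => n _; rewrite /U le_min; have := hb1 n; have := hb0 n.
move=> /andP[? ?] /andP[? ?]; apply/andP; split; lra.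
Qed.

Lemma s0L : \sum_n s0 n <= \sum_n L' n.
Proof.
apply: ler_sum => n _; rewrite /L' le_min; have := hb1 n; have := hb0 n.
move=> /andP[? ?] /andP[? ?]; apply/andP; split; lra.
Qed.

Lemma EU : \sum_n (gp n * c1 n + gp n * c0 n) = \sum_n U n.
Proof. by apply: eq_bigr => n _; rewrite gp_eq. Qed.

Lemma EL : \sum_n (gm n * c1 n + gm n * c0 n) = \sum_n L' n.
Proof. by apply: eq_bigr => n _; rewrite gm_eq. Qed.

Lemma alg_bound :
  (EY * (1 - m) - \sum_n (gm n * c1 n + gm n * c0 n)) / V
    <= (\sum_n s1 n) / m - (\sum_n s0 n) / (\sum_n c0 n)
    <= (\sum_n (gp n * c1 n + gp n * c0 n) - m * EY) / V.
Proof.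
rewrite ED EU EL; have Vp := Vpos.
rewrite !ler_pM2r ?invr_gt0 //.
have := s1U; have := s0L; rewrite EEY => *.
apply/andP; split; lra.
Qed.


Lemma mulle1 (l x : R) : 0 <= l <= 1 -> 0 <= x -> 0 <= l * x <= x.
Proof.
move=> /andP[l0 l1] x0; rewrite mulr_ge0 //=.
by rewrite -{2}(mul1r x) ler_wpM2r.
Qed.

Lemma alg_sharp v :
  (EY * (1 - m) - \sum_n (gm n * c1 n + gm n * c0 n)) / V <= v
    <= (\sum_n (gp n * c1 n + gp n * c0 n) - m * EY) / V ->
  exists s1' s0' : I -> R,
    [/\ forall n, s1' n + s0' n = s1 n + s0 n,
        forall n, Ylo * c1 n <= s1' n <= Yhi * c1 n,
        forall n, Ylo * c0 n <= s0' n <= Yhi * c0 n &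
        (\sum_n s1' n) / m - (\sum_n s0' n) / (\sum_n c0 n) = v].
Proof.
rewrite EU EL => /andP[h1 h2]; have Vp := Vpos.
rewrite ler_pdivrMr // in h1; rewrite ler_pdivlMr // in h2.
set tau := v * V + m * EY.
pose Lx n := s1 n + s0 n - L' n.
have hper n : [/\ Ylo * c1 n <= Lx n, Lx n <= U n, U n <= Yhi * c1 n,
                 Ylo * c0 n <= s1 n + s0 n - U n & s1 n + s0 n - Lx n <= Yhi * c0 n].
  rewrite /Lx /U /L'; have := hb1 n; have := hb0 n.
  have w1 : Ylo * c1 n <= Yhi * c1 n by rewrite ler_wpM2r.
  have w0 : Ylo * c0 n <= Yhi * c0 n by rewrite ler_wpM2r.
  move=> /andP[? ?] /andP[? ?].
  case: (minfacts _ (s1 n + s0 n - Ylo * c0 n) (Yhi * c1 n)) => u1 u2 u3.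
  case: (minfacts _ (s1 n + s0 n - Ylo * c1 n) (Yhi * c0 n)) => l1 l2 l3.
  by case: u3 => e3; case: l3 => e4; split; lra.
have ELx : \sum_n Lx n = EY - \sum_n L' n by rewrite /Lx sumrB.
have hLU : \sum_n Lx n <= \sum_n U n.
  by apply: ler_sum => n _; case: (hper n).
have hLt : \sum_n Lx n <= tau by rewrite ELx /tau; lra.
have hUt : tau <= \sum_n U n by rewrite /tau; lra.
pose lam := if \sum_n U n == \sum_n Lx n then 0
            else (tau - \sum_n Lx n) / (\sum_n U n - \sum_n Lx n).
have [lam01 lamE] : 0 <= lam <= 1 /\
    \sum_n Lx n + lam * (\sum_n U n - \sum_n Lx n) = tau.
  rewrite /lam; case: eqP => e.
    by rewrite ler01 lexx mul0r addr0; split => //; lra.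
  have pos : 0 < \sum_n U n - \sum_n Lx n.
    rewrite subr_gt0 lt_neqAle hLU andbT; apply/eqP => e'; apply: e; by rewrite e'.
  split.
    apply/andP; split; first by apply: divr_ge0; lra.
    by rewrite ler_pdivrMr // mul1r; lra.
  by field; rewrite lt0r_neq0.
exists (fun n => Lx n + lam * (U n - Lx n)).
exists (fun n => s1 n + s0 n - (Lx n + lam * (U n - Lx n))).
split.
- by move=> n; ring.
- move=> n; case: (hper n) => a1 a2 a3 a4 a5.
  have := @mulle1 lam (U n - Lx n) lam01; rewrite subr_ge0 => /(_ a2) /andP[b1 b2].
  apply/andP; split; lra.
- move=> n; case: (hper n) => a1 a2 a3 a4 a5.
  have := @mulle1 lam (U n - Lx n) lam01; rewrite subr_ge0 => /(_ a2) /andP[b1 b2].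
  apply/andP; split; lra.
have S1 : \sum_n (Lx n + lam * (U n - Lx n)) = tau.
  by rewrite big_split /= -mulr_sumr -lamE; congr (_ + _ * _); exact: sumrB.
have S0 : \sum_n (s1 n + s0 n - (Lx n + lam * (U n - Lx n))) = EY - tau.
  by rewrite sumrB S1.
rewrite S1 S0 Sc0 /tau EV; case/andP: hm; rewrite -/m => q1 q2.
field; apply/andP; split; apply/eqP; lra.
Qed.

End Alg.

Section S.
Context {R : realType} {d : measure_display} {T : measurableType d}.
Variable P : probability T R.
Context {I : finType}.
Variables (X : T -> R) (N : T -> I).
Hypothesis mX : measurable_fun setT X.
Hypothesis mN : forall n, measurable [set t | N t = n].
Hypothesis X01 : forall t, X t = 0 \/ X t = 1.

Definition A (x : R) (n : I) := [set t | X t = x /\ N t = n].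

Lemma mA x n : measurable (A x n).
Proof.
have := mX measurableT [set x] (measurable_set1 x); rewrite setTI => h.
have -> : A x n = X @^-1` [set x] `&` [set t | N t = n] by [].
exact: measurableI.
Qed.

Lemma Ex_sum (J : Type) (s : seq J) (F : J -> T -> R) :
  (forall j, P.-integrable setT (EFin \o F j)) ->
  Ex P (fun t => \sum_(j <- s) F j t) = \sum_(j <- s) Ex P (F j).
Proof.
move=> iF; elim: s => [|j s ih].
  rewrite big_nil /Ex.
  under eq_integral do rewrite big_nil.
  by rewrite integral0.
rewrite big_cons -ih.
have iS : P.-integrable setT (EFin \o (fun t => \sum_(k <- s) F k t)).
  apply: (eq_integrable measurableT (fun t => \sum_(k <- s) (EFin \o F k) t)).
    by move=> t _ /=; rewrite sumEFin.
  by apply: (integrable_sum measurableT s) => k _; exact: iF.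
rewrite /Ex.
have := (@RintegralD _ _ _ P setT (F j) (fun t => \sum_(k <- s) F k t) measurableT (iF j) iS).
rewrite /Rintegral => <-.
by congr fine; apply: eq_integral => t _; rewrite big_cons.
Qed.


Notation int f := (P.-integrable setT (EFin \o f)).

Lemma ExD f g : int f -> int g -> Ex P (fun t => f t + g t) = Ex P f + Ex P g.
Proof. by move=> hf hg; exact: (@RintegralD _ _ _ P setT f g measurableT hf hg). Qed.

Lemma ExZ c f : int f -> Ex P (fun t => c * f t) = c * Ex P f.
Proof. by move=> hf; exact: (@RintegralZl _ _ _ P setT f c measurableT hf). Qed.

Lemma intD f g : int f -> int g -> int (fun t => f t + g t).
Proof.
move=> hf hg; apply: (eq_integrable measurableT ((EFin \o f) \+ (EFin \o g))).
  by move=> t _.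
exact: integrableD.
Qed.

Lemma intZ c f : int f -> int (fun t => c * f t).
Proof.
move=> hf; apply: (eq_integrable measurableT (fun t => (c%:E * (EFin \o f) t)%E)).
  by move=> t _.
exact: integrableZl.
Qed.

Lemma int1 : int (fun _ => 1).
Proof. exact: (finite_measure_integrable_cst P 1 measurableT). Qed.

Lemma int_ind f B : int f -> measurable B -> int (fun t => f t * \1_B t).
Proof.
move=> hf mB.
apply: (eq_integrable measurableT (((EFin \o f) \* (EFin \o (\1_B : T -> R)))%E)).
  by move=> t _.
apply: integrableMl => //.
exists 1; split => // r r1 t _ /=.
rewrite indicE.
by case: (t \in B) => /=; rewrite ?normr1 ?normr0 ltW // (le_lt_trans _ r1).
Qed.

Lemma indA x n t : \1_(A x n) t = ((X t == x) && (N t == n))%:R :> R.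
Proof.
rewrite indicE; have [h|h] := boolP ((X t == x) && (N t == n)).
  by move/andP: h => [/eqP hx /eqP hn]; rewrite mem_set.
by rewrite memNset // => -[hx hn]; rewrite hx hn !eqxx in h.
Qed.

Lemma decomp (h : R -> I -> R) t :
  h (X t) (N t) = \sum_n (h 1 n * \1_(A 1 n) t + h 0 n * \1_(A 0 n) t).
Proof.
rewrite (bigD1 (N t)) //= big1 => [|n nN]; last first.
  by rewrite eq_sym in nN; rewrite !indA (negbTE nN) !andbF /= !mulr0 addr0.
rewrite !indA eqxx !andbT.
have e01 : (0 == 1 :> R) = false by rewrite eq_sym oner_eq0.
by case: (X01 t) => ->; rewrite ?eqxx ?oner_eq0 ?e01 /= ?mulr0 ?mulr1 ?addr0 ?add0r.
Qed.

Definition S f x n := Ex P (fun t => f t * \1_(A x n) t).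

Lemma Ex_hXN f (h : R -> I -> R) : int f ->
  Ex P (fun t => f t * h (X t) (N t)) = \sum_n (h 1 n * S f 1 n + h 0 n * S f 0 n).
Proof.
move=> hf.
have -> : (fun t => f t * h (X t) (N t)) = (fun t => \sum_n
   (h 1 n * (f t * \1_(A 1 n) t) + h 0 n * (f t * \1_(A 0 n) t))).
  apply/funext => t; rewrite decomp mulr_sumr; apply: eq_bigr => n _.
  by ring.
rewrite Ex_sum; last by move=> n; apply: intD; apply: intZ; apply: int_ind => //; exact: mA.
apply: eq_bigr => n _; rewrite ExD; try by apply: intZ; apply: int_ind => //; exact: mA.
by rewrite !ExZ //; apply: int_ind => //; exact: mA.
Qed.


Lemma int_hXN (h : R -> I -> R) : int (fun t => h (X t) (N t)).
Proof.
have -> : (fun t => h (X t) (N t)) = (fun t => \sum_(n <- index_enum I)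
   (h 1 n * (1 * \1_(A 1 n) t) + h 0 n * (1 * \1_(A 0 n) t))).
  by apply/funext => t; rewrite decomp; apply: eq_bigr => n _; rewrite !mul1r.
apply: (eq_integrable measurableT (fun t => \sum_(n <- index_enum I)
   (EFin \o (fun t => h 1 n * (1 * \1_(A 1 n) t) + h 0 n * (1 * \1_(A 0 n) t))) t)).
  by move=> t _ /=; rewrite sumEFin.
apply: (integrable_sum measurableT) => n _.
by apply: intD; apply: intZ; (apply: int_ind; [exact: int1|exact: mA]).
Qed.

Lemma ind_eq (U : eqType) (g : T -> U) u t :
  \1_[set t | g t = u] t = (g t == u)%:R :> R.
Proof.
rewrite indicE; have [h|h] := eqVneq (g t) u.
  by rewrite mem_set.
by rewrite memNset //; exact/eqP.
Qed.

Lemma Ex_eq g f (h : R -> I -> R) : int f -> (forall t, g t = f t * h (X t) (N t)) ->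
  Ex P g = \sum_n (h 1 n * S f 1 n + h 0 n * S f 0 n).
Proof. by move=> hf hg; rewrite -Ex_hXN //; congr Ex; apply/funext. Qed.

Definition c x n := S (fun _ => 1) x n.

Lemma c_ge0 x n : 0 <= c x n.
Proof.
rewrite /c /S /Ex; apply: fine_ge0; apply: integral_ge0 => t _.
by rewrite lee_fin mul1r indicE ler0n.
Qed.

Lemma Pr_c x n : Pr P (A x n) = c x n.
Proof.
rewrite /Pr /c /S /Ex; under eq_integral do rewrite mul1r.
by rewrite integral_indic ?setIT //; exact: mA.
Qed.

Lemma S_null f x n : int f -> c x n = 0 -> S f x n = 0.
Proof.
move=> hf; rewrite -Pr_c /Pr => h0.
have PA : P (A x n) = 0.
  rewrite -[P (A x n)]fineK ?h0 //; exact: fin_num_measure (mA x n).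
have -> : S f x n = Rintegral P (A x n) f.
  rewrite Rintegral_mkcond /S; congr Ex; apply/funext => t.
  by rewrite indicE /patch; case: (t \in A x n); rewrite ?mulr1 ?mulr0.
rewrite /Rintegral null_set_integral //; first exact: mA.
exact: (measurable_funS measurableT (@subsetT _ _) (measurable_int _ hf)).
Qed.

Lemma sum_delta (F G : I -> R) n :
  \sum_m ((m == n)%:R * F m + (m == n)%:R * G m) = F n + G n.
Proof.
rewrite (bigD1 n) //= big1 ?addr0 ?eqxx ?mul1r // => m mn.
by rewrite (negbTE mn) !mul0r addr0.
Qed.

Lemma Ex1 : Ex P (fun _ => 1) = 1.
Proof.
have := @Rintegral_cst _ _ _ P setT measurableT 1.
rewrite /Rintegral /Ex => ->; rewrite mul1r; exact: (congr1 fine (probability_setT P)).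
Qed.

Lemma S_h (h : R -> I -> R) x n : (x = 0 \/ x = 1) ->
  S (fun t => h (X t) (N t)) x n = h x n * c x n.
Proof.
move=> x01.
rewrite /S (@Ex_eq _ (fun _ => 1)
   (fun x' m => h x' m * ((x' == x) && (m == n))%:R) int1); last first.
  by move=> t; rewrite mul1r indA.
rewrite (bigD1 n) //= big1 ?addr0 => [|m mn]; last by rewrite (negbTE mn) !andbF !mulr0 !mul0r addr0.
rewrite eqxx !andbT.
have e01 : (0 == 1 :> R) = false by rewrite eq_sym oner_eq0.
by case: x01 => ->; rewrite ?eqxx ?e01 ?oner_eq0 /= ?mulr0 ?mulr1 ?mul0r ?add0r ?addr0.
Qed.


Lemma Pr_Ex B : measurable B -> Pr P B = Ex P (fun t => 1 * \1_B t).
Proof.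
move=> mB; rewrite /Pr /Ex; under eq_integral do rewrite mul1r.
by rewrite integral_indic ?setIT.
Qed.

Lemma e01 : (0 == 1 :> R) = false.
Proof. by rewrite eq_sym oner_eq0. Qed.

Lemma Ep n : p_ P N n = c 1 n + c 0 n.
Proof.
rewrite /p_ Pr_Ex // (@Ex_eq _ (fun _ => 1) (fun _ m => (m == n)%:R) int1).
  exact: sum_delta.
by move=> t; rewrite ind_eq.
Qed.

Lemma EXn n : X_ P X N n = c 1 n / (c 1 n + c 0 n).
Proof.
rewrite /X_ /condE -/(p_ P N n) Ep; congr (_ / _).
rewrite (@Ex_eq _ (fun _ => 1) (fun x m => x * (m == n)%:R) int1); last first.
  by move=> t; rewrite ind_eq mul1r.
rewrite (eq_bigr (fun m => (m == n)%:R * c 1 m + (m == n)%:R * 0)).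
  by rewrite sum_delta addr0.
by move=> m _; rewrite /c; ring.
Qed.

Lemma EYn f n : int f -> Y_ P f N n = (S f 1 n + S f 0 n) / (c 1 n + c 0 n).
Proof.
move=> hf; rewrite /Y_ /condE -/(p_ P N n) Ep; congr (_ / _).
rewrite (@Ex_eq _ f (fun _ m => (m == n)%:R) hf); last by move=> t; rewrite ind_eq.
exact: sum_delta.
Qed.

Lemma EEX : Ex P X = \sum_n c 1 n.
Proof.
rewrite (@Ex_eq _ (fun _ => 1) (fun x _ => x) int1); last by move=> t; rewrite mul1r.
by apply: eq_bigr => m _; rewrite mul1r mul0r addr0.
Qed.

Lemma EEYf f : int f -> Ex P f = \sum_n (S f 1 n + S f 0 n).
Proof.
move=> hf; rewrite (@Ex_eq _ f (fun _ _ => 1) hf); last by move=> t; rewrite mulr1.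
by apply: eq_bigr => m _; rewrite !mul1r.
Qed.

Lemma EVar : Var P X = \sum_n ((1 - \sum_n c 1 n) ^+ 2 * c 1 n + (0 - \sum_n c 1 n) ^+ 2 * c 0 n).
Proof.
rewrite /Var (@Ex_eq _ (fun _ => 1) (fun x _ => (x - Ex P X) ^+ 2) int1); last first.
  by move=> t; rewrite mul1r.
by rewrite EEX.
Qed.

Lemma EPrX x : (x = 0 \/ x = 1) -> Pr P [set t | X t = x] = \sum_n c x n.
Proof.
move=> x01; have mB : measurable [set t | X t = x].
  by have := mX measurableT [set x] (measurable_set1 x); rewrite setTI.
rewrite Pr_Ex // (@Ex_eq _ (fun _ => 1) (fun x' _ => (x' == x)%:R) int1); last first.
  by move=> t; rewrite ind_eq.
apply: eq_bigr => m _; case: x01 {mB} => ->; rewrite ?eqxx ?e01 ?oner_eq0 /=.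
  by rewrite mul0r mul1r add0r.
by rewrite mul0r mul1r addr0.
Qed.

Lemma ESX f x : int f -> (x = 0 \/ x = 1) ->
  Ex P (fun t => f t * \1_[set t | X t = x] t) = \sum_n S f x n.
Proof.
move=> hf x01; rewrite (@Ex_eq _ f (fun x' _ => (x' == x)%:R) hf); last first.
  by move=> t; rewrite ind_eq.
apply: eq_bigr => m _; case: x01 => ->; rewrite ?eqxx ?e01 ?oner_eq0 /=.
  by rewrite mul0r mul1r add0r.
by rewrite mul0r mul1r addr0.
Qed.

Lemma EDpar f : int f -> Dpar P X f =
  (\sum_n S f 1 n) / (\sum_n c 1 n) - (\sum_n S f 0 n) / (\sum_n c 0 n).
Proof.
move=> hf; rewrite /Dpar /condE !ESX ?EPrX //; by [left|right].
Qed.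

Lemma condE_A f x n : condE P f [set t | X t = x /\ N t = n] = S f x n / c x n.
Proof. by rewrite /condE -Pr_c. Qed.

Lemma EDplus f Ylo Yhi : int f -> DplusMOB P X f N Ylo Yhi =
  (\sum_n (gp _ _ (c 1) (c 0) (S f 1) (S f 0) Ylo Yhi n * c 1 n
          + gp _ _ (c 1) (c 0) (S f 1) (S f 0) Ylo Yhi n * c 0 n)
   - (\sum_n c 1 n) * \sum_n (S f 1 n + S f 0 n))
  / \sum_n ((1 - \sum_n c 1 n) ^+ 2 * c 1 n + (0 - \sum_n c 1 n) ^+ 2 * c 0 n).
Proof.
move=> hf; rewrite /DplusMOB EVar EEX.
rewrite (@Ex_eq _ (fun _ => 1) (fun _ m => gp _ _ (c 1) (c 0) (S f 1) (S f 0) Ylo Yhi m) int1).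
  by rewrite (EEYf _ hf).
by move=> t; rewrite mul1r /gp EYn // EXn.
Qed.

Lemma EDminus f Ylo Yhi : int f -> DminusMOB P X f N Ylo Yhi =
  ((\sum_n (S f 1 n + S f 0 n)) * (1 - \sum_n c 1 n)
   - \sum_n (gm _ _ (c 1) (c 0) (S f 1) (S f 0) Ylo Yhi n * c 1 n
          + gm _ _ (c 1) (c 0) (S f 1) (S f 0) Ylo Yhi n * c 0 n))
  / \sum_n ((1 - \sum_n c 1 n) ^+ 2 * c 1 n + (0 - \sum_n c 1 n) ^+ 2 * c 0 n).
Proof.
move=> hf; rewrite /DminusMOB EVar EEX (EEYf _ hf).
rewrite (@Ex_eq _ (fun _ => 1) (fun _ m => gm _ _ (c 1) (c 0) (S f 1) (S f 0) Ylo Yhi m) int1) //.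
by move=> t; rewrite mul1r /gm EYn // EXn.
Qed.

Lemma hsum : \sum_n (c 1 n + c 0 n) = 1.
Proof.
have := Ex1; rewrite (@Ex_eq _ (fun _ => 1) (fun _ _ => 1) int1); last first.
  by move=> t; rewrite mulr1.
by move=> h; rewrite -[RHS]h; apply: eq_bigr => n _; rewrite !mul1r.
Qed.

Lemma bounds_of f Ylo Yhi : int f ->
  (forall (x : R) (n : I), (x = 0 \/ x = 1) ->
      0 < Pr P [set t | X t = x /\ N t = n] ->
      Ylo <= condE P f [set t | X t = x /\ N t = n] <= Yhi) ->
  forall x n, (x = 0 \/ x = 1) -> Ylo * c x n <= S f x n <= Yhi * c x n.
Proof.
move=> hf hb x n x01.
have [e|ne] := eqVneq (c x n) 0.
  by rewrite e (S_null _ _ _ hf e) !mulr0 lexx.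
have cp : 0 < c x n by rewrite lt0r ne c_ge0.
move: (hb x n x01).
change ((0 < Pr P (A x n) -> Ylo <= condE P f (A x n) <= Yhi) -> Ylo * c x n <= S f x n <= Yhi * c x n).
rewrite Pr_c /condE Pr_c -/(S f x n) => /(_ cp) /andP[h1 h2].
rewrite ler_pdivlMr // in h1; rewrite ler_pdivrMr // in h2.
by rewrite h1 h2.
Qed.

Lemma hm_of : (exists n, 0 < p_ P N n /\ 0 < X_ P X N n < 1) ->
  0 < \sum_n c 1 n < 1.
Proof.
case=> n [hp /andP[hx1 hx2]]; rewrite Ep in hp; rewrite EXn in hx1 hx2.
rewrite ltr_pdivlMr // mul0r in hx1; rewrite ltr_pdivrMr // mul1r in hx2.
have ge (F : I -> R) : (forall i, 0 <= F i) -> F n <= \sum_i F i.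
  move=> F0; rewrite (bigD1 n) //= lerDl; exact: sumr_ge0.
have := ge _ (c_ge0 1); have := ge _ (c_ge0 0).
have := hsum; rewrite big_split /= => *.
apply/andP; split; lra.
Qed.

Lemma main Y Ylo Yhi : Ylo <= Yhi -> int Y ->
  (exists n, 0 < p_ P N n /\ 0 < X_ P X N n < 1) ->
  (forall (x : R) (n : I), (x = 0 \/ x = 1) ->
      0 < Pr P [set t | X t = x /\ N t = n] ->
      Ylo <= condE P Y [set t | X t = x /\ N t = n] <= Yhi) ->
  (DminusMOB P X Y N Ylo Yhi <= Dpar P X Y <= DplusMOB P X Y N Ylo Yhi) /\
  (forall v, DminusMOB P X Y N Ylo Yhi <= v <= DplusMOB P X Y N Ylo Yhi ->
    exists Y' : T -> R,
      [/\ measurable_fun setT Y' /\ int Y',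
          (forall (x : R) (n : I), (x = 0 \/ x = 1) ->
             0 < Pr P [set t | X t = x /\ N t = n] ->
             Ylo <= condE P Y' [set t | X t = x /\ N t = n] <= Yhi),
          (forall n, Y_ P Y' N n = Y_ P Y N n) &
          Dpar P X Y' = v]).
Proof.
move=> hlh hY hex hb.
have hb1 n : Ylo * c 1 n <= S Y 1 n <= Yhi * c 1 n.
  by apply: bounds_of => //; right.
have hb0 n : Ylo * c 0 n <= S Y 0 n <= Yhi * c 0 n.
  by apply: bounds_of => //; left.
have hm := hm_of hex.
rewrite EDminus // EDplus //; split.
  rewrite EDpar //.
  exact: (@alg_bound _ _ (c 1) (c 0) (S Y 1) (S Y 0) Ylo Yhi (c_ge0 1) (c_ge0 0) hb1 hb0 hsum hm).
move=> v hv.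
have [s1' [s0' [e1 b1 b0 eD]]] :=
  @alg_sharp _ _ (c 1) (c 0) (S Y 1) (S Y 0) Ylo Yhi hlh (c_ge0 1) (c_ge0 0) hb1 hb0 hsum hm v hv.
pose hh := fun (x : R) (m : I) => if x == 1 then s1' m / c 1 m else s0' m / c 0 m.
have iY' := int_hXN hh.
have S1 n : S (fun t => hh (X t) (N t)) 1 n = s1' n.
  rewrite S_h; last by right.
  rewrite /hh eqxx; have [e|ne] := eqVneq (c 1 n) 0.
    by move: (b1 n); rewrite e !mulr0 => /andP[p q]; apply/eqP; rewrite eq_le p q.
  by rewrite divfK.
have S0 n : S (fun t => hh (X t) (N t)) 0 n = s0' n.
  rewrite S_h; last by left.
  rewrite /hh e01; have [e|ne] := eqVneq (c 0 n) 0.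
    by move: (b0 n); rewrite e !mulr0 => /andP[p q]; apply/eqP; rewrite eq_le p q.
  by rewrite divfK.
exists (fun t => hh (X t) (N t)); split.
- split => //; apply/measurable_EFinP; exact: (measurable_int _ iY').
- move=> x n x01 hpos.
  change (Ylo <= condE P (fun t => hh (X t) (N t)) (A x n) <= Yhi).
  have {}hpos : 0 < c x n by rewrite -Pr_c; exact: hpos.
  rewrite /condE Pr_c -/(S _ x n).
  case: x01 => ex; subst x; [rewrite S0 | rewrite S1].
    have := b0 n; case/andP => q1 q2.
    by rewrite ler_pdivlMr // ler_pdivrMr // q1 q2.
  have := b1 n; case/andP => q1 q2.
  by rewrite ler_pdivlMr // ler_pdivrMr // q1 q2.
- by move=> n; rewrite !EYn // S1 S0 e1.
rewrite EDpar //.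
by rewrite (eq_bigr _ (fun n _ => S1 n)) (eq_bigr _ (fun n _ => S0 n)).
Qed.

End S.

Theorem proposition3 (R : realType) (I : finType)
  (d : measure_display) (T : measurableType d) (P : probability T R)
  (X Y : T -> R) (N : T -> I) (Ylo Yhi : R) :
  Ylo <= Yhi ->
  standing P X Y N Ylo Yhi ->
  (DminusMOB P X Y N Ylo Yhi <= Dpar P X Y <= DplusMOB P X Y N Ylo Yhi) /\
  (forall v : R,
     DminusMOB P X Y N Ylo Yhi <= v <= DplusMOB P X Y N Ylo Yhi ->
     exists (d' : measure_display) (T' : measurableType d')
            (P' : probability T' R) (X' Y' : T' -> R) (N' : T' -> I),
       [/\ standing P' X' Y' N' Ylo Yhi,
           same_observed P X Y N P' X' Y' N' &
           Dpar P' X' Y' = v]).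
Proof.
move=> hlh [[mX mY] [mN X01] iY hex hb].
have [h1 h2] := @main _ _ _ P _ X N mX mN X01 Y Ylo Yhi hlh iY hex hb.
split => // v hv.
have [Y' [[mY' iY'] hb' eY eD]] := h2 v hv.
exists d, T, P, X, Y', N; split => //.
Qed.
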